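(* Let $H$ be a finite-dimensional real or complex Hilbert space with inner product $(\cdot,\cdot)$ and norm $\|u\|=(u,u)^{1/2}$, and let $A:H\to H$ be a self-adjoint operator with eigenvalues $0<\lambda_1\le\lambda_2\le\dots\le\lambda_K$, so that $A\ge \delta I$ with $\delta=\lambda_1>0$. Let $f$ be a real function defined and nonzero on $[\lambda_1,\lambda_K]$ with $f(\lambda_k)>0$ for all $k$, and write $f^{-1}(\lambda)=1/f(\lambda)$. For $\varphi\in H$ let $u=f^{-1}(A)\varphi$ be the solution of $f(A)u=\varphi$. Let $m\ge 1$ and let $a_i>0$, $b_i>0$, $i=1,\dots,m$, be such that the function $r(\lambda)=\sum_{i=1}^m a_i (b_i+\lambda)^{-1}$ satisfies $$|r(\lambda)-f^{-1}(\lambda)|\le \varepsilon\quad\text{for all }\lambda\in[\lambda_1,\lambda_K].$$ Let $w_i\in H$ be the solutions of $(b_iI+A)w_i=\varphi$, $i=1,\dots,m$, and let $\tilde w_i\in H$ satisfy $$\|\tilde w_i-w_i\|\le \varepsilon_i\|\varphi\|,\qquad \varepsilon_i=\frac{\varepsilon_0}{b_i+\delta},\quad i=1,\dots,m,$$ for some $\varepsilon_0\ge 0$. Define $\hat u=\sum_{i=1}^m a_i\tilde w_i$. Then $$\|\hat u-u\|\le\big(\varepsilon+\varepsilon_0\,(f^{-1}(\delta)+\varepsilon)\big)\|\varphi\|.$$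
   Context: Operator functions are defined spectrally: if $\psi_k$ ($\|\psi_k\|=1$) are orthonormal eigenvectors of $A$ with $A\psi_k=\lambda_k\psi_k$, then $g(A)u=\sum_{k=1}^K g(\lambda_k)(u,\psi_k)\psi_k$. In particular $f^{-1}(A)=\sum_k f(\lambda_k)^{-1}(\cdot,\psi_k)\psi_k$, and $f^{-1}(\delta)=1/f(\lambda_1)$. *)

(* Defs.v *)
(* R : realType, H = 'cV[R]_n (real case) or 'cV[R[i]]_n (complex case). *)
From mathcomp Require Import all_boot all_order all_algebra reals complex.
Set Implicit Arguments. Unset Strict Implicit. Unset Printing Implicit Defensive.
Import Order.TTheory GRing.Theory Num.Theory.
Local Open Scope ring_scope.
Local Open Scope complex_scope.

Section Defs.
Variable R : realType.

Definition dotR n (u v : 'cV[R]_n) : R := \sum_i u i 0 * v i 0.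
Definition normR n (u : 'cV[R]_n) : R := Num.sqrt (dotR u u).
(* spectral operator function g(A)u = sum_k g(lam_k) (u,psi_k) psi_k *)
Definition specR n (lam : 'I_n -> R) (psi : 'I_n -> 'cV[R]_n) (g : R -> R)
  (u : 'cV[R]_n) : 'cV[R]_n :=
  \sum_k (g (lam k) * dotR u (psi k)) *: psi k.

Definition dotC n (u v : 'cV[R[i]]_n) : R[i] := \sum_i u i 0 * (v i 0)^*.
Definition normC n (u : 'cV[R[i]]_n) : R := Num.sqrt (@complex.Re R (dotC u u)).
Definition adjC n (A : 'M[R[i]]_n) : 'M[R[i]]_n := map_mx (fun z => z^*) A^T.
Definition specC n (lam : 'I_n -> R) (psi : 'I_n -> 'cV[R[i]]_n) (g : R -> R)
  (u : 'cV[R[i]]_n) : 'cV[R[i]]_n :=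
  \sum_k ((g (lam k))%:C * dotC u (psi k)) *: psi k.

Definition ratf m (a b : 'I_m -> R) (x : R) : R := \sum_i a i / (b i + x).

End Defs.

(* Main.v *)
Require Import Defs.
From mathcomp Require Import all_boot all_order all_algebra reals complex.
From mathcomp Require Import ring lra.
Import Order.TTheory GRing.Theory Num.Theory.
Local Open Scope ring_scope.
Local Open Scope complex_scope.

Local Notation cj := (@Num.conj _).
Section Basic.
Variable R : realType.

Lemma ReD (x y : R[i]) : complex.Re (x + y) = complex.Re x + complex.Re y. Proof. by case: x => ? ?; case: y => ? ?. Qed.
Lemma Re0 : complex.Re (0 : R[i]) = 0. Proof. by []. Qed.
Lemma Re_sum (I : finType) (F : I -> R[i]) : complex.Re (\sum_i F i) = \sum_i complex.Re (F i).
Proof. exact: (big_morph _ ReD Re0). Qed.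
Lemma ReJ (x : R[i]) : complex.Re (cj x) = complex.Re x. Proof. by case: x => ? ?. Qed.
Lemma cj_real (t : R) : cj (t%:C) = t%:C. Proof. exact: conjc_real. Qed.
Lemma ReMr (t : R) (x : R[i]) : complex.Re (t%:C * x) = t * complex.Re x.
Proof. case: x => a b /=. ring. Qed.
Lemma ImMr (t : R) (x : R[i]) : complex.Im (t%:C * x) = t * complex.Im x.
Proof. case: x => a b /=. ring. Qed.
Definition sq (z : R[i]) := complex.Re (z * cj z).
Lemma sqE z : sq z = complex.Re z ^+ 2 + complex.Im z ^+ 2.
Proof. rewrite /sq; case: z => a b /=. ring. Qed.
Lemma sq_ge0 z : 0 <= sq z.
Proof. by rewrite sqE addr_ge0 // sqr_ge0. Qed.
Lemma sqMr t z : sq (t%:C * z) = t ^+ 2 * sq z.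
Proof. rewrite !sqE ReMr ImMr. ring. Qed.
Lemma complex_neq0 (x : R) : x != 0 -> x%:C != 0.
Proof. move=> hx; apply/eqP => h; move/eqP: hx; apply; case: h. done. Qed.

Variable N : nat.
Implicit Types u v z : 'cV[R[i]]_N.

Lemma dotCDl u v z : dotC (u + v) z = dotC u z + dotC v z.
Proof. by rewrite /dotC -big_split; apply eq_bigr => i _; rewrite mxE mulrDl. Qed.
Lemma dotCNl u z : dotC (- u) z = - dotC u z.
Proof. by rewrite /dotC -sumrN; apply eq_bigr => i _; rewrite mxE mulNr. Qed.
Lemma dotCBl u v z : dotC (u - v) z = dotC u z - dotC v z.
Proof. by rewrite dotCDl dotCNl. Qed.
Lemma dotCZl c u z : dotC (c *: u) z = c * dotC u z.
Proof. by rewrite /dotC mulr_sumr; apply eq_bigr => i _; rewrite mxE mulrA. Qed.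
Lemma dotC0l z : dotC 0 z = 0.
Proof. by rewrite /dotC big1 // => i _; rewrite mxE mul0r. Qed.
Lemma dotC_suml (I : finType) (F : I -> 'cV[R[i]]_N) z :
  dotC (\sum_i F i) z = \sum_i dotC (F i) z.
Proof. exact: (big_morph (fun u => dotC u z) (fun u v => dotCDl u v z) (dotC0l z)). Qed.
Lemma dotCJ u v : dotC u v = cj (dotC v u).
Proof. by rewrite /dotC rmorph_sum; apply eq_bigr => i _; rewrite rmorphM /= conjCK mulrC. Qed.
Lemma dotCDr u v z : dotC z (u + v) = dotC z u + dotC z v.
Proof. by rewrite dotCJ dotCDl rmorphD /= -!dotCJ. Qed.
Lemma dotCZr c u z : dotC z (c *: u) = cj c * dotC z u.
Proof. by rewrite dotCJ dotCZl rmorphM /= -!dotCJ. Qed.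

Lemma Q_ge0 u : 0 <= complex.Re (dotC u u).
Proof.
rewrite /dotC Re_sum; apply sumr_ge0 => i _; exact: sq_ge0.
Qed.

Lemma Qsc u v t : complex.Re (dotC (u + t%:C *: v) (u + t%:C *: v)) =
  complex.Re (dotC u u) + 2 * t * complex.Re (dotC u v) + t ^+ 2 * complex.Re (dotC v v).
Proof.
rewrite dotCDl !dotCDr !dotCZl !dotCZr cj_real (dotCJ v u) !ReD !ReMr ReJ.
ring.
Qed.

Lemma CS u v : complex.Re (dotC u v) ^+ 2 <= complex.Re (dotC u u) * complex.Re (dotC v v).
Proof.
set B := complex.Re (dotC u v); set Qu := complex.Re (dotC u u); set Qv := complex.Re (dotC v v).
have H t : 0 <= Qu + 2 * t * B + t ^+ 2 * Qv by rewrite -Qsc Q_ge0.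
have Qu0 : 0 <= Qu by exact: Q_ge0.
have Qv0 : 0 <= Qv by exact: Q_ge0.
have [Qvz|Qvp] := eqVneq Qv 0.
  have [Bz|Bnz] := eqVneq B 0.
    by rewrite Bz Qvz expr0n /= mulr0.
  have := H (- (Qu + 1) / (2 * B)).
  have -> : Qu + 2 * (- (Qu + 1) / (2 * B)) * B + (- (Qu + 1) / (2 * B)) ^+ 2 * Qv = -1.
    rewrite Qvz; field; exact: Bnz.
  by rewrite ler0N1.
have Qvpos : 0 < Qv by rewrite lt_def Qvp Qv0.
have := H (- B / Qv).
have -> : Qu + 2 * (- B / Qv) * B + (- B / Qv) ^+ 2 * Qv = (Qu * Qv - B ^+ 2) / Qv.
  by field.
by rewrite pmulr_lge0 ?invr_gt0 // subr_ge0.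
Qed.

Definition nC u := Num.sqrt (complex.Re (dotC u u)).
Lemma nCE u : normC u = nC u. Proof. by []. Qed.

Lemma nC_ge0 u : 0 <= normC u. Proof. exact: sqrtr_ge0. Qed.

Lemma mink u v : normC (u + v) <= normC u + normC v.
Proof.
rewrite /normC.
have := Qsc u v 1; rewrite rmorph1 scale1r => ->.
set B := complex.Re (dotC u v); set Qu := complex.Re (dotC u u); set Qv := complex.Re (dotC v v).
have Qu0 : 0 <= Qu by exact: Q_ge0.
have Qv0 : 0 <= Qv by exact: Q_ge0.
have hB : B <= Num.sqrt Qu * Num.sqrt Qv.
  rewrite -sqrtrM //; apply: (le_trans (ler_norm B)).
  by rewrite -sqrtr_sqr ler_wsqrtr // CS.
rewrite -[X in _ <= X]ger0_norm ?addr_ge0 ?sqrtr_ge0 // -sqrtr_sqr ler_wsqrtr //.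
rewrite sqrrD !sqr_sqrtr //.
lra.
Qed.

Lemma normCZ (t : R) u : normC (t%:C *: u) = `|t| * normC u.
Proof.
rewrite /normC dotCZl dotCZr cj_real !ReMr mulrA -expr2 sqrtrM ?sqr_ge0 //.
by rewrite sqrtr_sqr.
Qed.

Lemma normC0 : normC (0 : 'cV[R[i]]_N) = 0.
Proof. by rewrite /normC dotC0l sqrtr0. Qed.

Lemma normC_sum (I : finType) (F : I -> 'cV[R[i]]_N) :
  normC (\sum_i F i) <= \sum_i normC (F i).
Proof.
apply: (big_ind2 (fun x y => normC x <= y)); first by rewrite normC0.
  move=> x1 x2 y1 y2 h1 h2; apply: le_trans (mink _ _) _; exact: lerD.
by [].
Qed.

Section Ortho.
Variable psi : 'I_N -> 'cV[R[i]]_N.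
Hypothesis hpsi : forall j k, dotC (psi j) (psi k) = (j == k)%:R.

Lemma coord_sum (x : 'I_N -> R[i]) j : dotC (\sum_k x k *: psi k) (psi j) = x j.
Proof.
rewrite dotC_suml (bigD1 j) //= dotCZl hpsi eqxx mulr1 big1 ?addr0 // => k /negPf hk.
by rewrite dotCZl hpsi hk mulr0.
Qed.

Lemma expand u : u = \sum_k dotC u (psi k) *: psi k.
Proof.
pose P : 'M[R[i]]_N := \matrix_(i, k) psi k i 0.
pose Ph : 'M[R[i]]_N := \matrix_(k, i) cj (psi k i 0).
have h1 : Ph *m P = 1%:M.
  apply/matrixP => j k; rewrite !mxE.
  transitivity (dotC (psi k) (psi j)).
    by rewrite /dotC; apply eq_bigr => l _; rewrite !mxE mulrC.
  by rewrite hpsi eq_sym.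
have h2 := mulmx1C h1.
rewrite -{1}[u]mul1mx -h2 -mulmxA.
apply/matrixP => i j; rewrite (ord1 j) !mxE summxE.
apply eq_bigr => k _; rewrite !mxE mulrC /dotC; congr (_ * _).
by apply eq_bigr => l _; rewrite !mxE mulrC.
Qed.

Lemma dotC_coords u v : dotC u v = \sum_k dotC u (psi k) * cj (dotC v (psi k)).
Proof.
rewrite {1}(expand u) dotC_suml; apply eq_bigr => k _.
by rewrite dotCZl (dotCJ (psi k) v).
Qed.

Lemma Q_coords u : complex.Re (dotC u u) = \sum_k sq (dotC u (psi k)).
Proof. by rewrite {1}dotC_coords Re_sum. Qed.

End Ortho.
End Basic.
Arguments expand {R N psi} hpsi u.
Arguments coord_sum {R N psi} hpsi x j.
Arguments dotC_coords {R N psi} hpsi u v.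
Arguments Q_coords {R N psi} hpsi u.
Arguments normC_sum {R N I} F.
Arguments mink {R N} u v.
Arguments nC_ge0 {R N} u.
Arguments normCZ {R N} t u.
Lemma complex_case (R : realType) :
  (forall (n : nat) (A : 'M[R[i]]_n.+1) (lam : 'I_n.+1 -> R)
     (psi : 'I_n.+1 -> 'cV[R[i]]_n.+1) (f : R -> R) (phi : 'cV[R[i]]_n.+1)
     (m : nat) (a b : 'I_m -> R) (eps eps0 : R)
     (w wt : 'I_m -> 'cV[R[i]]_n.+1),
   adjC A = A ->
   (forall j k, dotC (psi j) (psi k) = (j == k)%:R) ->
   (forall k, A *m psi k = (lam k)%:C *: psi k) ->
   (forall j k : 'I_n.+1, (j <= k)%N -> lam j <= lam k) ->
   0 < lam ord0 ->
   (forall x, lam ord0 <= x <= lam ord_max -> f x != 0) ->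
   (forall k, 0 < f (lam k)) ->
   (0 < m)%N ->
   (forall i, 0 < a i) -> (forall i, 0 < b i) ->
   (forall x, lam ord0 <= x <= lam ord_max -> `|ratf a b x - (f x)^-1| <= eps) ->
   (forall i, (b i)%:C%:M *m w i + A *m w i = phi) ->
   0 <= eps0 ->
   (forall i, normC (wt i - w i) <= eps0 / (b i + lam ord0) * normC phi) ->
   normC (\sum_i (a i)%:C *: wt i - specC lam psi (fun x => (f x)^-1) phi)
     <= (eps + eps0 * ((f (lam ord0))^-1 + eps)) * normC phi).
Proof.
move=> n A lam psi f phi m a b eps eps0 w wt _ hpsi hA hmono hl0 _ _ _ ha hb hr hw he0 hwt.
have hrange k : lam ord0 <= lam k <= lam ord_max.
  by rewrite !hmono // leq_ord.
have eps_ge0 : 0 <= eps.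
  by apply: le_trans (hr _ (hrange ord0)).
have hcA u k : dotC (A *m u) (psi k) = (lam k)%:C * dotC u (psi k).
  rewrite {1}(expand hpsi u) mulmx_sumr.
  have -> : \sum_k0 A *m (dotC u (psi k0) *: psi k0)
      = \sum_k0 (dotC u (psi k0) * (lam k0)%:C) *: psi k0.
    by apply eq_bigr => k0 _; rewrite -scalemxAr hA scalerA.
  by rewrite (coord_sum hpsi) mulrC.
have hwc i k : dotC (w i) (psi k) = dotC phi (psi k) / (b i + lam k)%:C.
  have := congr1 (fun v => dotC v (psi k)) (hw i) => /=.
  rewrite dotCDl mul_scalar_mx dotCZl hcA -mulrDl -rmorphD => <-.
  rewrite mulrAC mulfV ?mul1r // complex_neq0 //.
  by apply: lt0r_neq0; apply: ltr_wpDr; [apply: ltW; apply: lt_le_trans (hl0) _; case/andP: (hrange k) | exact: hb].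
set S := specC _ _ _ _.
set D := \sum_i (a i)%:C *: w i - S.
have -> : \sum_i (a i)%:C *: wt i - S = \sum_i (a i)%:C *: (wt i - w i) + D.
  rewrite /D addrA -big_split /=; congr (_ - _); apply eq_bigr => i _.
  by rewrite -scalerDr subrK.
have hDc k : dotC D (psi k) = (ratf a b (lam k) - (f (lam k))^-1)%:C * dotC phi (psi k).
  rewrite /D dotCBl dotC_suml /S /specC (coord_sum hpsi).
  rewrite /ratf rmorphB rmorph_sum mulrBl mulr_suml; congr (_ - _).
  apply eq_bigr => i _; rewrite dotCZl hwc rmorphM fmorphV /=. 
  by rewrite mulrCA mulrC.
have hD : normC D <= eps * normC phi.
  rewrite /normC -[eps]ger0_norm // -sqrtr_sqr -sqrtrM ?sqr_ge0 //.
  apply: ler_wsqrtr; rewrite !(Q_coords hpsi) mulr_sumr; apply: ler_sum => k0 _.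
  rewrite hDc sqMr; apply: ler_wpM2r; first exact: sq_ge0.
  have := hr _ (hrange k0); set d := _ - _ => hd.
  move: hd; rewrite ler_norml => /andP[h1 h2]; nra.
have hsum : normC (\sum_i (a i)%:C *: (wt i - w i)) <= eps0 * ratf a b (lam ord0) * normC phi.
  apply: le_trans (normC_sum _) _.
  rewrite /ratf mulr_sumr mulr_suml; apply: ler_sum => i _.
  rewrite normCZ ger0_norm; last exact: ltW (ha i).
  apply: le_trans (ler_wpM2l (ltW (ha i)) (hwt i)) _.
  have -> : a i * (eps0 / (b i + lam ord0) * normC phi) = eps0 * (a i / (b i + lam ord0)) * normC phi by ring.
  by [].
have hr0 : ratf a b (lam ord0) <= (f (lam ord0))^-1 + eps.
  have := hr _ (hrange ord0); rewrite ler_norml => /andP[_ h]; lra.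
apply: le_trans (mink _ _) _.
have np0 := nC_ge0 phi.
have : eps0 * ratf a b (lam ord0) * normC phi <= eps0 * ((f (lam ord0))^-1 + eps) * normC phi.
  by rewrite ler_wpM2r // ler_wpM2l.
move: hsum hD; lra.
Qed.

Section Emb.
Variable R : realType.
Variable N : nat.
Local Notation emb M := (map_mx (real_complex R) M).

Lemma dotC_emb (u v : 'cV[R]_N) : dotC (emb u) (emb v) = (dotR u v)%:C.
Proof.
rewrite /dotC /dotR rmorph_sum; apply eq_bigr => i _.
by rewrite !mxE rmorphM /= cj_real.
Qed.

Lemma normC_emb (u : 'cV[R]_N) : normC (emb u) = normR u.
Proof. by rewrite /normC dotC_emb. Qed.

Lemma emb_sum (I : finType) (F : I -> 'cV[R]_N) : emb (\sum_i F i) = \sum_i emb (F i).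
Proof. exact: map_mx_sum. Qed.

Lemma emb_spec lam (psi : 'I_N -> 'cV[R]_N) g phi :
  specC lam (fun k => emb (psi k)) g (emb phi) = emb (specR lam psi g phi).
Proof.
rewrite /specC /specR emb_sum; apply eq_bigr => k _.
by rewrite map_mxZ rmorphM dotC_emb.
Qed.
End Emb.

Theorem theorem1 (R : realType) :
  (* real Hilbert space *)
  (forall (n : nat) (A : 'M[R]_n.+1) (lam : 'I_n.+1 -> R)
     (psi : 'I_n.+1 -> 'cV[R]_n.+1) (f : R -> R) (phi : 'cV[R]_n.+1)
     (m : nat) (a b : 'I_m -> R) (eps eps0 : R)
     (w wt : 'I_m -> 'cV[R]_n.+1),
   A^T = A ->
   (forall j k, dotR (psi j) (psi k) = (j == k)%:R) ->
   (forall k, A *m psi k = lam k *: psi k) ->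
   (forall j k : 'I_n.+1, (j <= k)%N -> lam j <= lam k) ->
   0 < lam ord0 ->
   (forall x, lam ord0 <= x <= lam ord_max -> f x != 0) ->
   (forall k, 0 < f (lam k)) ->
   (0 < m)%N ->
   (forall i, 0 < a i) -> (forall i, 0 < b i) ->
   (forall x, lam ord0 <= x <= lam ord_max -> `|ratf a b x - (f x)^-1| <= eps) ->
   (forall i, (b i)%:M *m w i + A *m w i = phi) ->
   0 <= eps0 ->
   (forall i, normR (wt i - w i) <= eps0 / (b i + lam ord0) * normR phi) ->
   normR (\sum_i a i *: wt i - specR lam psi (fun x => (f x)^-1) phi)
     <= (eps + eps0 * ((f (lam ord0))^-1 + eps)) * normR phi)
  /\
  (* complex Hilbert space *)
  (forall (n : nat) (A : 'M[R[i]]_n.+1) (lam : 'I_n.+1 -> R)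
     (psi : 'I_n.+1 -> 'cV[R[i]]_n.+1) (f : R -> R) (phi : 'cV[R[i]]_n.+1)
     (m : nat) (a b : 'I_m -> R) (eps eps0 : R)
     (w wt : 'I_m -> 'cV[R[i]]_n.+1),
   adjC A = A ->
   (forall j k, dotC (psi j) (psi k) = (j == k)%:R) ->
   (forall k, A *m psi k = (lam k)%:C *: psi k) ->
   (forall j k : 'I_n.+1, (j <= k)%N -> lam j <= lam k) ->
   0 < lam ord0 ->
   (forall x, lam ord0 <= x <= lam ord_max -> f x != 0) ->
   (forall k, 0 < f (lam k)) ->
   (0 < m)%N ->
   (forall i, 0 < a i) -> (forall i, 0 < b i) ->
   (forall x, lam ord0 <= x <= lam ord_max -> `|ratf a b x - (f x)^-1| <= eps) ->
   (forall i, (b i)%:C%:M *m w i + A *m w i = phi) ->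
   0 <= eps0 ->
   (forall i, normC (wt i - w i) <= eps0 / (b i + lam ord0) * normC phi) ->
   normC (\sum_i (a i)%:C *: wt i - specC lam psi (fun x => (f x)^-1) phi)
     <= (eps + eps0 * ((f (lam ord0))^-1 + eps)) * normC phi).
Proof.
split; last exact: complex_case.
move=> n A lam psi f phi m a b eps eps0 w wt hAT hpsi hA hmono hl0 hf hfp hm ha hb hr hw he0 hwt.
have := @complex_case R n (map_mx (real_complex R) A) lam
  (fun k => map_mx (real_complex R) (psi k)) f (map_mx (real_complex R) phi) m a b eps eps0
  (fun i => map_mx (real_complex R) (w i)) (fun i => map_mx (real_complex R) (wt i)).
have hsum : \sum_i (a i)%:C *: map_mx (real_complex R) (wt i)
    = map_mx (real_complex R) (\sum_i a i *: wt i).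
  by rewrite emb_sum; apply eq_bigr => i _; rewrite map_mxZ.
rewrite emb_spec hsum -map_mxB !normC_emb; apply => //.
- rewrite /adjC; apply/matrixP => i j; rewrite !mxE.
  by rewrite -[in RHS]hAT mxE; apply: conjc_real.
- by move=> j k; rewrite dotC_emb hpsi rmorph_nat.
- by move=> k; rewrite -map_mxM hA map_mxZ.
- by move=> i; rewrite -map_scalar_mx -!map_mxM -map_mxD hw.
- by move=> i; rewrite -map_mxB !normC_emb.
Qed.
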